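(* For every point $q\in\partial\Sigma''$, the real hyperplane $h_q\subset\mathbb{P}^{n+1}$ satisfies $h_q|_\Sigma=q+\bar q+2D'_q$ for some real effective divisor $D'_q$ of degree $n-1$ on $\Sigma$, where $\bar q=\sigma(q)$.
   Context: Fix $n\ge2$, reals $a_1<\dots<a_{2n}$, $f(z)=\prod(z-a_i)$. $\Lambda\subset\mathbb{P}^n$ is a rational normal curve of degree $n$ with coordinate $z$ (real part $\Lambda^\sigma=\mathbb{R}\cup\{\infty\}$), ${\rm C}(\Lambda)\subset\mathbb{P}^{n+1}$ its cone, $\pi:\mathbb{P}^{n+1}\dashrightarrow\mathbb{P}^n$ the projection from the vertex, $\Sigma=\{v^2=f(z)\}\subset{\rm C}(\Lambda)$ ($v$ fiber coordinate of $\mathscr O_\Lambda(n)\cong{\rm C}(\Lambda)\setminus$vertex), hyperelliptic with double cover $\pi:\Sigma\to\Lambda$, ramification points $r_i$ over $a_i$, hyperelliptic involution $\tau$, real structure $\sigma(v,z)=((-1)^n\bar v,\bar z)$. Arcs: $I_i=[a_i,a_{i+1}]$ for $1\le i\le 2n-1$, $I_0=[a_{2n},+\infty]\cup[-\infty,a_1]$. $\pi^{-1}(I_i)$ is a circle; if $i\equiv n\pmod2$ it is pointwise $\sigma$-fixed (real circle $\Sigma^\sigma_i$), otherwise (pure imaginary circle $\Sigma_i$) $\sigma$ coincides with $\tau$ on it. The real circles cut $\Sigma$ into two closed halves exchanged by $\sigma$; $\Sigma'$ is one; the arcs $\Sigma_i\cap\Sigma'$ cut $\Sigma'$ into two closed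 halves, and $\Sigma''$ (the quarter) is one of them. $\partial\Sigma''$ consists of $2n$ arcs, one over each $I_i$ mapped homeomorphically onto $I_i$ by $\pi$; the one over $I_n$ is the central semicircle $(\Sigma^\sigma_n)'$. For $q\in\partial\Sigma''$ with $\lambda=\pi(q)\in I_i$: if $0\le i<n$, $h_q=\pi^{-1}(\underline h)$ where $\underline h\subset\mathbb{P}^n$ is the hyperplane passing through $a_1,\dots,a_i$ and through $\lambda$ with contact order $n-i$ to $\Lambda$ at $\lambda$ (for $i=0$: the osculating hyperplane at $\lambda$); if $n<i\le2n-1$, $h_q=\pi^{-1}(\underline h)$ with $\underline h$ through $a_{i+1},\dots,a_{2n}$ and contact order $i-n$ at $\lambda$; if $q$ lies on the central semicircle, $h_q$ is the hyperplane with $h_q|_\Sigma=2D$, where $D$ is the unique real member of the pencil $|r_1+\dots+r_n|$ containing $q$. *)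

(* Defs.v *)
From HB Require Import structures.
From mathcomp Require Import all_boot all_order all_algebra.
From mathcomp Require Import complex.
Set Implicit Arguments. Unset Strict Implicit. Unset Printing Implicit Defensive.
Import Order.TTheory GRing.Theory Num.Theory.
Local Open Scope ring_scope.

Section Hyperelliptic.
Variable R : rcfType.
Local Notation C := (R[i]).
Local Notation rc := (real_complex R).

(* n and the real branch values a_1 < ... < a_(2n) (indices 1..2n are used) *)
Variable n : nat.
Variable a : nat -> R.

Definition fpoly : {poly C} := \prod_(1 <= j < (2 * n).+1) ('X - (rc (a j))%:P).

(* Points of Sigma: an affine point (z, v) of { v^2 = f(z) }, or one of the two
   points at infinity: inr true  = infinity_+ (where v/z^n -> 1),
                       inr false = infinity_- (where v/z^n -> -1). *)
Definition point := ((C * C) + bool)%type.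

Definition onSigma (P : point) : Prop :=
  match P with inl (z, v) => v ^+ 2 = fpoly.[z] | inr _ => True end.

Definition sigma (P : point) : point :=
  match P with
  | inl (z, v) => inl (conjc z, (-1) ^+ n * conjc v)
  | inr s => inr (if odd n then ~~ s else s)
  end.

Definition rpt (j : nat) : point := inl (rc (a j), 0).

(* the projection pi : Sigma -> Lambda = P^1; None = infinity *)
Definition proj (P : point) : option C :=
  match P with inl (z, _) => Some z | inr _ => None end.

Definition overI (i : nat) (q : point) : Prop :=
  if i == 0%N then
    (exists s, q = inr s) \/
    (exists (x : R) (v : C), q = inl (rc x, v) /\ (x <= a 1 \/ a (2 * n) <= x))
  else exists (x : R) (v : C), q = inl (rc x, v) /\ a i <= x <= a i.+1.

(* padded reversal: t^m p(1/t) for size p <= m+1 *)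
Definition revpad (m : nat) (p : {poly C}) : {poly C} :=
  \poly_(k < m.+1) p`_(m - k).

(* Order of vanishing of the function A(z) + B(z) v at the affine point
   (alpha, beta) of the curve { v^2 = g(z) } (g with simple roots) is >= k:
   - beta <> 0: z - alpha is a local parameter and v is congruent to any
     polynomial w with w(alpha) = beta and w^2 = g mod (z-alpha)^k;
   - beta = 0: ramification point, order = multiplicity of alpha in A^2 - B^2 g. *)
Definition ordAffGe (g A B : {poly C}) (alpha beta : C) (k : nat) : Prop :=
  if beta == 0 then is_true (('X - alpha%:P) ^+ k %| (A ^+ 2 - B ^+ 2 * g))
  else exists w : {poly C}, w.[alpha] = beta /\
         ('X - alpha%:P) ^+ k %| (g - w ^+ 2) /\
         ('X - alpha%:P) ^+ k %| (A + B * w).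

(* Sections of pi^* O_{P^1}(m) on Sigma: F = A(z) + B(z) v with deg A <= m,
   deg B <= m - n.  ordGe m A B P k : ord_P(F) >= k.  At infinity we use
   t = 1/z, F t^m = A~(t) + B~(t) v~ with v~ = t^n v, v~^2 = t^(2n) f(1/t). *)
Definition ordGe (m : nat) (A B : {poly C}) (P : point) (k : nat) : Prop :=
  match P with
  | inl (z, v) => ordAffGe fpoly A B z v k
  | inr s => ordAffGe (revpad (2 * n) fpoly) (revpad m A) (revpad (m - n) B)
               0 (if s then 1 else -1) k
  end.

Definition ordEq (m : nat) (A B : {poly C}) (P : point) (k : nat) : Prop :=
  ordGe m A B P k /\ ~ ordGe m A B P k.+1.

Definition isSection (m : nat) (A B : {poly C}) : Prop :=
  (size A <= m.+1)%N /\ (B == 0 \/ (size B + n <= m.+1)%N) /\ (A != 0 \/ B != 0).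

(* linear equivalence of effective divisors (as multisets of points):
   D - E = div(F2/F1) for nonzero sections F1, F2 of the same pi^*O(m) *)
Definition linEq (D E : seq point) : Prop :=
  exists (m : nat) (A1 B1 A2 B2 : {poly C}),
    isSection m A1 B1 /\ isSection m A2 B2 /\
    forall P, onSigma P -> exists k1 k2,
      ordEq m A1 B1 P k1 /\ ordEq m A2 B2 P k2 /\
      (k1 + count_mem P D = k2 + count_mem P E)%N.

Definition realEffDiv (D : seq point) (d : nat) : Prop :=
  (forall P, P \in D -> onSigma P) /\ size D = d /\ perm_eq (map sigma D) D.

(* hyperplanes of P^{n+1}: sum_i c_i X_i + b Y = 0, (c, b) <> 0, restricting to
   Sigma as the section c(z) + b v of pi^*O(n). *)
Definition isHyperplane (c : {poly C}) (b : C) : Prop := isSection n c b%:P.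

(* multiplicity at x in P^1 of the divisor cut on Lambda by the hyperplane
   sum_i c_i X_i = 0 of P^n *)
Definition multLam (c : {poly C}) (x : option C) : nat :=
  match x with Some al => mup al c | None => (n - (size c).-1)%N end.

Definition hq (i : nat) (q : point) (c : {poly C}) (b : C) : Prop :=
  if (i < n)%N then
    b = 0 /\ isHyperplane c b /\
    forall x, multLam c x =
      count_mem x ([seq Some (rc (a j)) | j <- iota 1 i] ++ nseq (n - i) (proj q))
  else if (n < i)%N then
    b = 0 /\ isHyperplane c b /\
    forall x, multLam c x =
      count_mem x ([seq Some (rc (a j)) | j <- iota i.+1 (2 * n - i)]
                   ++ nseq (i - n) (proj q))
  else
    isHyperplane c b /\
    exists D : seq point, realEffDiv D n /\ q \in D /\
      linEq D [seq rpt j | j <- iota 1 n] /\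
      forall P, onSigma P -> ordEq n c b%:P P (2 * count_mem P D).

End Hyperelliptic.

(* Main.v *)
Require Import Defs.
From HB Require Import structures.
From mathcomp Require Import all_boot all_order all_algebra.
From mathcomp Require Import complex.
From mathcomp Require Import ring lra zify.
Import Order.TTheory GRing.Theory Num.Theory.
Local Open Scope ring_scope.
Set Implicit Arguments. Unset Strict Implicit.

Section Aux.
Variable R : rcfType.
Local Notation C := (R[i]).

Lemma hensel (g : {poly C}) (al be : C) : be != 0 -> g.[al] = be ^+ 2 ->
  forall k, exists w : {poly C}, w.[al] = be /\ ('X - al%:P) ^+ k %| g - w ^+ 2.
Proof.
move=> be0 gal.
suff H : forall k, exists w : {poly C}, w.[al] = be /\ ('X - al%:P) ^+ k.+1 %| g - w ^+ 2.
  case=> [|k]; last exact: H.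
  by exists be%:P; rewrite hornerC expr0 dvd1p.
elim=> [|k [w [wal /dvdpP [h eh]]]].
  exists be%:P; rewrite hornerC expr1 dvdp_XsubCl; split=> //.
  by rewrite /root !hornerE gal subrr.
set Y := ('X - al%:P) ^+ k.+1 in eh.
set c := h.[al] / (2 * be).
have Y0 : Y.[al] = 0 by rewrite /Y horner_exp hornerXsubC subrr expr0n.
exists (w + c%:P * Y); split.
  by rewrite hornerD hornerM hornerC Y0 wal mulr0 addr0.
set Q := h - 2%:R * c%:P * w - c%:P ^+ 2 * Y.
have eQ : g - (w + c%:P * Y) ^+ 2 = Q * Y.
  have -> : g = h * Y + w ^+ 2 by rewrite -eh; ring.
  rewrite /Q; ring.
have rQ : root Q al.
  rewrite /root /Q !(hornerD, hornerN, hornerM, hornerC).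
  rewrite (_ : Y.[al] = 0) // wal mulr0 subr0 /c; apply/eqP; field.
  by [].

move: rQ; rewrite -dvdp_XsubCl => /dvdpP [Q' eQ'].
by rewrite eQ eQ' exprS /Y -mulrA; apply: dvdp_mull.
Qed.

End Aux.


Section Ord.
Variable R : rcfType.
Local Notation C := (R[i]).
Variable n : nat.
Variable a : nat -> R.

Lemma ordAff_nr (g A : {poly C}) al be k : be != 0 -> g.[al] = be ^+ 2 ->
  ordAffGe g A 0 al be k <-> ('X - al%:P) ^+ k %| A.
Proof.
move=> be0 gal; rewrite /ordAffGe (negbTE be0); split.
  by case=> w [_ [_]]; rewrite mul0r addr0.
move=> dA; have [w [wal dw]] := @hensel _ g al be be0 gal k.
by exists w; rewrite mul0r addr0.
Qed.

Lemma ordAff_r (g A : {poly C}) al k :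
  ordAffGe g A 0 al 0 k <-> ('X - al%:P) ^+ k %| A ^+ 2.
Proof. by rewrite /ordAffGe eqxx expr0n /= mul0r subr0. Qed.

Lemma mup_exact (p : {poly C}) x : p != 0 ->
  ('X - x%:P) ^+ (mup x p) %| p /\ ~ ('X - x%:P) ^+ (mup x p).+1 %| p.
Proof.
move=> p0; split; first by rewrite -mup_geq.
by rewrite -mup_geq // ltnn.
Qed.

Lemma size_fpoly : size (fpoly n a) = (2 * n).+2.-1.
Proof. by rewrite /fpoly size_prod_XsubC /index_iota size_iota subSS subn0. Qed.

Lemma fpoly_monic : fpoly n a \is monic.
Proof. exact: monic_prod_XsubC. Qed.

Lemma revpad_f0 : (revpad (2 * n) (fpoly n a)).[0] = 1.
Proof.
rewrite horner_coef0 /revpad coef_poly /= subn0.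
by have := fpoly_monic; rewrite monicE /lead_coef size_fpoly => /eqP.
Qed.

Lemma revpad0 m : revpad m (0 : {poly C}) = 0.
Proof. by apply/polyP => k; rewrite coef_poly !coef0; case: ifP. Qed.

Lemma revpad_split (c : {poly C}) m : (size c <= m.+1)%N ->
  revpad m c = 'X^(m - (size c).-1) * revpad (size c).-1 c.
Proof.
move=> sc; apply/polyP => k; rewrite coefXnM !coef_poly.
set d := (size c).-1.
have dm : (d <= m)%N by rewrite /d; case: (size c) sc.
case: (ltnP k (m - d)) => km.
  have -> : (k < m.+1)%N by lia.
  apply: nth_default; rewrite /d in km dm *; case: (size c) sc km dm => //= s _ km _; lia.
case: (ltnP k m.+1) => km1.
  have -> : (k - (m - d) < d.+1)%N by lia.
  by congr (_`_ _); lia.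
have -> : (k - (m - d) < d.+1)%N = false by apply/negbTE; rewrite -leqNgt; lia.
by [].
Qed.

Lemma mup_revpad (c : {poly C}) m : c != 0 -> (size c <= m.+1)%N ->
  mup 0 (revpad m c) = (m - (size c).-1)%N.
Proof.
move=> c0 sc; rewrite revpad_split //.
have r0 : ~~ root (revpad (size c).-1 c) 0.
  rewrite /root horner_coef0 /revpad coef_poly /= subn0.
  by rewrite -lead_coefE lead_coef_eq0.
rewrite mupMl //.
have -> : 'X^(m - (size c).-1) = ('X - 0%:P) ^+ (m - (size c).-1) :> {poly C} by rewrite polyC0 subr0.
by rewrite mup_XsubCX eqxx.
Qed.



Lemma revpad_neq0 (c : {poly C}) m : c != 0 -> (size c <= m.+1)%N -> revpad m c != 0.
Proof.
move=> c0 sc.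
have r0 : ~~ root (revpad (size c).-1 c) 0.
  rewrite /root horner_coef0 /revpad coef_poly /= subn0.
  by rewrite -lead_coefE lead_coef_eq0.
rewrite (@revpad_split c m sc) mulf_neq0 //.
  by rewrite expf_neq0 // polyX_eq0.
by apply: contraNneq r0 => ->; rewrite /root horner0.
Qed.

Definition multP (c : {poly C}) (P : point R) : nat :=
  match P with
  | inl (z, v) => ((if v == 0%R then 2 else 1) * mup z c)%N
  | inr _ => (n - (size c).-1)%N
  end.

Lemma ord_pt (c : {poly C}) : c != 0 -> (size c <= n.+1)%N ->
  forall P, onSigma n a P -> ordEq n a n c 0%:P P (multP c P).
Proof.
move=> c0 sc [[z v]|s] /= HP; rewrite /ordEq /ordGe polyC0.
  have [->|v0] := eqP.
    rewrite !ordAff_r mul2n -addnn -mupM // -expr2.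
    by apply: mup_exact; rewrite expf_neq0.
  move/eqP: v0 => v0; rewrite !(ordAff_nr _ _ v0 (esym HP)) mul1n.
  exact: mup_exact.
rewrite revpad0.
have gal : (revpad (2 * n) (fpoly n a)).[0] = (if s then 1 else -1 : C) ^+ 2.
  by rewrite revpad_f0; case: s; rewrite ?sqrrN expr1n.
have be0 : (if s then 1 else -1 : C) != 0 by case: (s); rewrite ?oppr_eq0 oner_eq0.
rewrite !(ordAff_nr _ _ be0 gal) -(@mup_revpad c n c0 sc).
exact/mup_exact/revpad_neq0.
Qed.

End Ord.


Section Cx.
Variable R : rcfType.
Local Notation C := (R[i]).

Lemma conj_sq (v : C) (r : R) (k : nat) :
  v ^+ 2 = real_complex R r -> 0 <= (-1) ^+ k * r -> conjc v = (-1) ^+ k * v.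
Proof.
case: v => p q.
rewrite -[(-1) ^+ k : R]signr_odd -[(-1) ^+ k : C]signr_odd.
case: (odd k); rewrite ?expr1 ?expr0 ?mulN1r ?mul1r expr2 /GRing.mul /= => -[e1 e2] h.
  have pq : p * q = 0 by move: e2; rewrite [q * p]mulrC; lra.
  have -> : p = 0.
    move/eqP: pq; rewrite mulf_eq0 => /orP [/eqP //|/eqP q0].
    by move: e1 h; rewrite q0 mulr0 subr0 => <-; nra.
  by rewrite /GRing.opp /= oppr0.
have pq : p * q = 0 by move: e2; rewrite [q * p]mulrC; lra.
have -> : q = 0.
  move/eqP: pq; rewrite mulf_eq0 => /orP [/eqP p0|/eqP //].
  by move: e1 h; rewrite p0 mulr0 sub0r => <-; nra.
by rewrite oppr0.
Qed.
End Cx.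

Section Sign.
Variable R : rcfType.
Local Notation C := (R[i]).
Variable n : nat.
Variable a : nat -> R.

Lemma sign_prod (x : R) (P : pred nat) (r : seq nat) :
  (forall j, j \in r -> P j -> x <= a j) ->
  (forall j, j \in r -> ~~ P j -> a j <= x) ->
  0 <= (-1) ^+ (count P r) * \prod_(j <- r) (x - a j).
Proof.
elim: r => [|j r IH] H1 H2; first by rewrite big_nil expr0 mulr1.
rewrite big_cons /=.
have IH' := IH (fun k kr => H1 k (mem_behead (s:=j::r) kr)) (fun k kr => H2 k (mem_behead (s:=j::r) kr)).
case Pj: (P j) => /=.
  have := H1 j (mem_head _ _) Pj => hj.
  rewrite exprS; set u := (-1) ^+ _ * _ in IH'.
  have -> : -1 * (-1) ^+ count P r * ((x - a j) * \prod_(j0 <- r) (x - a j0)) = (a j - x) * u.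
    by rewrite /u; ring.
  by apply: mulr_ge0 => //; rewrite subr_ge0.
have := H2 j (mem_head _ _) (negbT Pj) => hj.
rewrite add0n; set u := (-1) ^+ _ * _ in IH'.
have -> : (-1) ^+ count P r * ((x - a j) * \prod_(j0 <- r) (x - a j0)) = (x - a j) * u.
  by rewrite /u; ring.
by apply: mulr_ge0 => //; rewrite subr_ge0.
Qed.

Lemma fpoly_real (x : R) :
  (fpoly n a).[real_complex R x] = real_complex R (\prod_(1 <= j < (2 * n).+1) (x - a j)).
Proof.
rewrite /fpoly horner_prod rmorph_prod; apply: eq_bigr => j _.
by rewrite hornerXsubC rmorphB.
Qed.


Lemma count_iota_gt m N : (m <= N)%N -> count (fun j => m < j)%N (iota 1 N) = (N - m)%N.
Proof.
move=> mN; rewrite -(subnKC mN) iotaD count_cat.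
rewrite (@eq_in_count _ _ pred0); last first.
  by move=> j; rewrite mem_iota => /andP [_ h] /=; apply/negbTE; lia.
rewrite count_pred0 add0n (@eq_in_count _ _ predT); last first.
  by move=> j; rewrite mem_iota => /andP [h _] /=; lia.
by rewrite count_predT size_iota; lia.
Qed.

Hypothesis amono : forall j, (1 <= j < 2 * n)%N -> a j < a j.+1.

Lemma amono_le j k : (1 <= j)%N -> (j <= k)%N -> (k <= 2 * n)%N -> a j <= a k.
Proof.
move=> j1 jk; elim: k jk => [|k IH] jk k2; first by lia.
case: (ltngtP j k.+1) => h.
- apply: le_trans (IH h _) _; first by lia.
  by apply/ltW/amono; lia.
- by lia.
- by rewrite h.
Qed.

Lemma conj_gen m x (v : C) : (m <= 2 * n)%N ->
  (forall j, (1 <= j <= m)%N -> a j <= x) ->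
  (forall j, (m < j <= 2 * n)%N -> x <= a j) ->
  v ^+ 2 = (fpoly n a).[real_complex R x] ->
  conjc v = (-1) ^+ m * v.
Proof.
move=> m2 Hl Hr; rewrite fpoly_real => e.
have H1 : forall j, j \in index_iota 1 (2 * n).+1 -> (m < j)%N -> x <= a j.
  by move=> j; rewrite mem_index_iota => /andP [j1 j2] mj; apply: Hr; lia.
have H2 : forall j, j \in index_iota 1 (2 * n).+1 -> ~~ (m < j)%N -> a j <= x.
  by move=> j; rewrite mem_index_iota => /andP [j1 j2] mj; apply: Hl; lia.
have := @sign_prod x (fun j => m < j)%N _ H1 H2.
rewrite {1}/index_iota subSS subn0 count_iota_gt // => h.
rewrite (@conj_sq _ _ _ (2 * n - m) e h).
by rewrite -signr_odd oddB // oddM /= signr_odd.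
Qed.

End Sign.


Section Pts.
Variable R : rcfType.
Local Notation C := (R[i]).
Local Notation rc := (real_complex R).
Variable n : nat.
Variable a : nat -> R.

Definition tau (P : point R) : point R :=
  match P with inl (z, v) => inl (z, - v) | inr s => inr (~~ s) end.

Lemma tauK (P : point R) : tau (tau P) = P.
Proof. by case: P => [[z v]|s] /=; rewrite ?opprK ?negbK. Qed.

Lemma sigma_tau (P : point R) : sigma n (tau P) = tau (sigma n P).
Proof.
case: P => [[z v]|s] /=; first by rewrite rmorphN mulrN.
by case: (odd n).
Qed.

Lemma sigmaK (P : point R) : sigma n (sigma n P) = P.
Proof.
case: P => [[z v]|s] /=.
  rewrite rmorphM conjcK rmorphXn rmorphN1 mulrA -exprMn mulrNN mulr1 expr1n mul1r.
  by case: v => p q /=; rewrite opprK.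
by case: (odd n); case: s.
Qed.

Lemma onSigma_tau (P : point R) : onSigma n a P -> onSigma n a (tau P).
Proof. by case: P => [[z v]|s] //=; rewrite sqrrN. Qed.

Lemma proj_tau (P : point R) : proj (tau P) = proj P.
Proof. by case: P => [[z v]|s]. Qed.

Lemma proj_eq (P Q : point R) : onSigma n a P -> onSigma n a Q -> proj P = proj Q ->
  P = Q \/ P = tau Q.
Proof.
case: P => [[z v]|s]; case: Q => [[z' v']|s'] //= hP hQ.
  case=> ez; subst z'; move: hQ; rewrite -hP => /eqP; rewrite eq_sym -subr_eq0 subr_sqr mulf_eq0.
  case/orP => /eqP h.
    by left; move/eqP: h; rewrite subr_eq0 => /eqP ->.
  by right; move/eqP: h; rewrite addr_eq0 => /eqP ->.
by case: s s' => -[]; auto.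
Qed.

Lemma tau_fix (P : point R) : (P == tau P) = if P is inl (_, v) then v == 0 else false.
Proof.
case: P => [[z v]|s] /=; last by case: s.
apply/eqP/eqP => [[]|->]; last by rewrite oppr0.
move/eqP; rewrite -subr_eq0 opprK -mulr2n mulrn_eq0 /= => /eqP //.
Qed.

End Pts.

Section Over.
Variable R : rcfType.
Local Notation C := (R[i]).
Local Notation rc := (real_complex R).
Variable n : nat.
Variable a : nat -> R.
Hypothesis amono : forall j, (1 <= j < 2 * n)%N -> a j < a j.+1.

Lemma sigma_over i (q : point R) : (i < 2 * n)%N -> onSigma n a q -> overI n a i q ->
  sigma n q = if odd (n + i) then tau q else q.
Proof.
move=> i2; rewrite /overI.
have sg : forall m x v, (m <= 2 * n)%N ->
  (forall j, (1 <= j <= m)%N -> a j <= x) ->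
  (forall j, (m < j <= 2 * n)%N -> x <= a j) -> odd m = odd i ->
  onSigma n a (inl (rc x, v)) ->
  sigma n (inl (rc x, v)) = if odd (n + i) then tau (inl (rc x, v)) else inl (rc x, v).
  move=> m x v m2 Hl Hr om /= e.
  rewrite [X in inl (X, _)](_ : _ = rc x); last by rewrite oppr0.
  rewrite (conj_gen m2 Hl Hr e) mulrA -exprD -signr_odd oddD om.
  by case: (odd (n + i)) (oddD n i) => <-; rewrite ?expr1 ?expr0 ?mulN1r ?mul1r.
case: eqP => [i0|i0] hq.
  case=> [[s ->]|[x [v [eq hx]]]]; last subst q.
    by rewrite /= i0 addn0; case: (odd n).
  case: hx => hx'.
    apply: (sg 0%N) => //.
    - by move=> j; lia.
    - by move=> j /andP [j1 j2]; apply: le_trans hx' (amono_le amono _ _ _) => //; lia.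
    - by rewrite i0.
  apply: (sg (2 * n)%N) => //.
  - by move=> j /andP [j1 j2]; apply: le_trans (amono_le amono _ _ _) hx' => //; lia.
  - by move=> j; lia.
  - by rewrite oddM i0.
case=> x [v [eq /andP [h1 h2]]]; subst q.
apply: (sg i) => //; first by lia.
  move=> j /andP [j1 j2]; apply: le_trans (amono_le amono _ _ _) h1 => //; lia.
move=> j /andP [j1 j2]; apply: le_trans h2 (amono_le amono _ _ _) => //; lia.
Qed.

End Over.


Section Cnt.
Variable R : rcfType.
Local Notation C := (R[i]).
Local Notation rc := (real_complex R).
Variable n : nat.
Variable a : nat -> R.

Lemma f_at_a j : (1 <= j <= 2 * n)%N -> (fpoly n a).[rc (a j)] = 0.
Proof.
move=> hj; rewrite fpoly_real; apply/eqP; rewrite (fmorph_eq0 (real_complex R)).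
rewrite prodf_seq_eq0; apply/hasP; exists j; last by rewrite subrr eqxx.
by rewrite mem_index_iota; lia.
Qed.

Lemma onSigma_rpt j : (1 <= j <= 2 * n)%N -> onSigma n a (rpt a j).
Proof. by move=> hj /=; rewrite f_at_a // expr0n. Qed.

Lemma sigma_rpt j : sigma n (rpt a j) = rpt a j.
Proof. by rewrite /= oppr0 (_ : Complex 0 0 = 0 :> C) ?mulr0. Qed.

Lemma multP_eq (c : {poly C}) (P : point R) :
  multP n c P = ((if P == tau P then 2 else 1) * multLam n c (proj P))%N.
Proof. by case: P => [[z v]|s]; rewrite tau_fix /= ?mul1n. Qed.

Lemma cnt_r (P : point R) (s : seq nat) :
  (forall j, j \in s -> (1 <= j <= 2 * n)%N) -> onSigma n a P ->
  ((if P == tau P then 2 else 1) * count_mem (proj P) [seq Some (rc (a j)) | j <- s])%N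
  = (2 * count_mem P [seq rpt a j | j <- s])%N.
Proof.
move=> hs hP; rewrite tau_fix !count_map.
case: P hP => [[z v]|b] /= hP.
  have [v0|v0] := eqP.
    subst v; congr (_ * _)%N; apply: eq_count => j /=.
    apply/eqP/eqP => -[e]; [by congr inl; congr pair; exact: e | by congr Some; exact: e].
  rewrite mul1n (@eq_in_count _ _ pred0); last first.
    move=> j js /=; apply/negbTE/eqP => -[ez]; apply: v0.
    have : v ^+ 2 == 0 by rewrite hP -ez f_at_a // hs.
    by rewrite expf_eq0 /= => /eqP.
  rewrite count_pred0 (@eq_in_count _ _ pred0) ?count_pred0 //.
  by move=> j js /=; apply/negbTE/eqP => -[_ /esym].
by rewrite !(@eq_in_count _ _ pred0) ?count_pred0.
Qed.


Lemma main_nc (c : {poly C}) (s : seq nat) (e : nat) (q : point R) :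
  c != 0 -> (size c <= n.+1)%N ->
  (forall j, j \in s -> (1 <= j <= 2 * n)%N) ->
  (size s + e = n)%N -> (0 < e)%N ->
  onSigma n a q -> sigma n q = (if odd e then tau q else q) ->
  (forall x, multLam n c x =
     count_mem x ([seq Some (rc (a j)) | j <- s] ++ nseq e (proj q))) ->
  exists D' : seq (point R), realEffDiv n a D' (n - 1) /\ forall P, onSigma n a P ->
    ordEq n a n c 0%:P P ((P == q) + (P == sigma n q) + 2 * count_mem P D')%N.
Proof.
move=> c0 sc hs hse e0 hq sq hm.
set k := e./2.
have he : e = (k + k + odd e)%N by rewrite addnn /k addnC odd_double_half.
exists ([seq rpt a j | j <- s] ++ nseq (e.-1 - k) q ++ nseq k (tau q)); split.
  split; [|split].
  - move=> P; rewrite !mem_cat => /or3P [/mapP [j js ->]| | ].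
    + exact/onSigma_rpt/hs.
    + by rewrite mem_nseq => /andP [_ /eqP ->].
    + by rewrite mem_nseq => /andP [_ /eqP ->]; apply: onSigma_tau.
  - rewrite !size_cat size_map !size_nseq; move: he; case: (odd e) => /= he; lia.
  - rewrite !map_cat -map_comp (eq_map sigma_rpt) !map_nseq sigma_tau sq.
    case: (odd e) in he *; last by [].
    rewrite tauK; have -> : (e.-1 - k = k)%N by lia.
    by rewrite perm_cat2l perm_catC.
move=> P hP.
have := ord_pt c0 sc hP; rewrite multP_eq hm count_cat mulnDr cnt_r //.
rewrite count_nseq !count_cat !count_nseq /=.
set cr := count_mem P _.
have [hp|hp] := eqVneq (proj q) (proj P); last first.
  have nq : (q == P) = false by apply/negbTE; apply: contraNneq hp => ->.
  have nt : (tau q == P) = false.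
    by apply/negbTE; apply: contraNneq hp => <-; rewrite proj_tau.
  have ns : (P == sigma n q) = false.
    by rewrite eq_sym sq; case: (odd e).
  rewrite [P == q]eq_sym nq nt ns /= !muln0 !mul0n.
  by move=> H; move: H; congr ordEq; rewrite ?muln0 ?addn0 ?add0n.
have [Pq|Pq] := eqVneq P q.
  subst P.
  have [qt|qt] := eqVneq q (tau q).
    have -> : sigma n q = q by rewrite sq -qt; case: (odd e).
    rewrite (_ : (q == q) = true); last exact/eqP.
    move=> H.
    by move: H; congr ordEq; move: he; case: (odd e) => /= he; lia.
  rewrite sq => H; move: H; congr ordEq.
  move: he; case: (odd e) => /= he; rewrite ?(negbTE qt) ?eqxx /=; lia.
have [Pt|Pt] := eqVneq P (tau q); last first.
  by have [] := proj_eq hP hq (esym hp); move/eqP; rewrite ?(negbTE Pq) ?(negbTE Pt).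
subst P; rewrite tauK.
have qt : (tau q == q) = false by apply/negbTE.
rewrite qt sq => H; move: H; congr ordEq.
have tt : (tau q == tau q) = true by apply/eqP.
move: he; case: (odd e) => /= he.
  by rewrite tt; lia.
by rewrite qt; lia.
Qed.

End Cnt.

Lemma map_rem_inj (T U : eqType) (f : T -> U) x (s : seq T) : injective f ->
  map f (rem x s) = rem (f x) (map f s).
Proof.
move=> fi; elim: s => [|y s IH] //=.
by rewrite (inj_eq fi); case: eqP => //= _; rewrite IH.
Qed.

Unset Implicit Arguments. Set Strict Implicit.

Theorem proposition6p2 (R : rcfType) (n : nat) (a : nat -> R) :
  (2 <= n)%N ->
  (forall j, (1 <= j < 2 * n)%N -> a j < a j.+1) ->
  forall (i : nat) (q : point R), (i < 2 * n)%N ->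
  onSigma n a q -> overI n a i q ->
  forall (c : {poly R[i]}) (b : R[i]), hq n a i q c b ->
  exists D' : seq (point R),
    realEffDiv n a D' (n - 1) /\
    forall P : point R, onSigma n a P ->
      ordEq n a n c b%:P P
        ((P == q) + (P == sigma n q) + 2 * count_mem P D')%N.
Proof.
move=> n2 amono i q i2 hqs hov c b.
have so := sigma_over amono i2 hqs hov.
rewrite /hq; case: ifP => iln.
  case=> -> [[sc [_ c0]] hm].
  have {}c0 : c != 0 by case: c0 => //; rewrite polyC0 eqxx.
  apply: (main_nc (s := iota 1 i) (e := (n - i)%N)) => //.
  - by move=> j; rewrite mem_iota; lia.
  - by rewrite size_iota; lia.
  - by lia.
  - by rewrite so oddB ?oddD //; lia.
case: ifP => nli.
  case=> -> [[sc [_ c0]] hm].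
  have {}c0 : c != 0 by case: c0 => //; rewrite polyC0 eqxx.
  apply: (main_nc (s := iota i.+1 (2 * n - i)) (e := (i - n)%N)) => //.
  - by move=> j; rewrite mem_iota; lia.
  - by rewrite size_iota; lia.
  - by lia.
  - by rewrite so oddB ?oddD 1?addbC //; lia.
have ein : i = n by lia.
case=> _ [D [[DS [Dsz Dp]] [qD [_ hD]]]].
have sq : sigma n q = q by rewrite so ein addnn odd_double.
exists (rem q D); split; [split; [|split]|].
- by move=> P /mem_rem /DS.
- by rewrite size_rem // Dsz subn1.
- rewrite map_rem_inj; last exact: (can_inj (@sigmaK _ n)).
  rewrite sq -(perm_cons q).
  have h1 : perm_eq [seq sigma n x | x <- D] (q :: rem q [seq sigma n x | x <- D]).
    by apply: perm_to_rem; rewrite -{1}sq map_f.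
  rewrite perm_sym in h1.
  exact: perm_trans h1 (perm_trans Dp (perm_to_rem qD)).
move=> P hP; have := hD P hP; congr ordEq.
rewrite sq (permP (perm_to_rem qD)) /= [q == P]eq_sym.
by case: (P == q); lia.
Qed.
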